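(* Let $G$ be a connected chordal graph and let $v\in V(G)$. For any $x,y\in N_G(v)$, the distance between $x$ and $y$ in $G-v$ equals the distance between $x$ and $y$ in the induced subgraph $G[N_G(v)]$.
   Context: Graphs are finite, simple, undirected. A graph is chordal if it has no induced cycle of length at least 4. $N_G(v)$ is the open neighborhood of $v$. Distances are lengths (number of edges) of shortest paths, infinite if no path exists. *)

(* Defs.v *)
From mathcomp Require Import all_boot.
Set Implicit Arguments. Unset Strict Implicit. Unset Printing Implicit Defensive.

Section Graphs.
Variables (T : finType) (e : rel T).

Definition simple_graph : Prop := symmetric e /\ irreflexive e.

Definition nbhd (v : T) : {set T} := [set u | e v u].

Definition walk_in (S : {set T}) (x y : T) (n : nat) : Prop :=
  exists p : seq T,
    [/\ path e x p, last x p = y, size p = n & all (fun z => z \in S) (x :: p)].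

(* dist_is S x y d : the distance from x to y in G[S] is d,
   where None stands for infinite distance (no path). *)
Definition dist_is (S : {set T}) (x y : T) (d : option nat) : Prop :=
  match d with
  | Some n => walk_in S x y n /\ (forall m, m < n -> ~ walk_in S x y m)
  | None => forall m, ~ walk_in S x y m
  end.

Definition connected_graph : Prop := forall x y : T,
  exists n, walk_in [set: T] x y n.

Definition induced_cycle (c : seq T) : Prop :=
  [/\ uniq c, cycle e c &
      forall x y, x \in c -> y \in c -> e x y -> (y == next c x) || (x == next c y)].

Definition chordal : Prop :=
  forall c : seq T, 4 <= size c -> ~ induced_cycle c.

End Graphs.

(* Main.v *)
Require Import Defs.
From mathcomp Require Import all_boot zify.
From Stdlib Require Import Classical.
Set Implicit Arguments. Unset Strict Implicit.

Section W.
Variables (T : finType) (e : rel T).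

Lemma last_take' (x : T) p i : i <= size p -> last x (take i p) = nth x (x :: p) i.
Proof.
move=> hi; rewrite (last_nth x) size_takel //.
have -> : x :: take i p = take i.+1 (x :: p) by [].
by rewrite nth_take.
Qed.

Lemma path_split (x : T) p i : path e x p -> i <= size p ->
  path e x (take i p) /\ path e (nth x (x :: p) i) (drop i p).
Proof.
move=> hp hi; move: hp; rewrite -{1}(cat_take_drop i p) cat_path => /andP[h1 h2].
by rewrite -last_take'.
Qed.

Lemma last_drop (x : T) p i : i <= size p -> last (nth x (x :: p) i) (drop i p) = last x p.
Proof.
move=> hi; rewrite -last_take' // -last_cat cat_take_drop //.
Qed.

Lemma all_nth (A : {set T}) x p i : all (fun z => z \in A) (x :: p) -> nth x (x :: p) i \in A.
Proof.
move=> /allP h; case: (ltnP i (size (x :: p))) => hi.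
  by apply: h; rewrite mem_nth.
by rewrite nth_default //; apply: h; rewrite inE eqxx.
Qed.

Lemma walk_cat (A : {set T}) x z y m k :
  walk_in e A x z m -> walk_in e A z y k -> walk_in e A x y (m + k).
Proof.
move=> [p1 [P1 L1 S1 A1]] [p2 [P2 L2 S2 A2]]; exists (p1 ++ p2); split.
- by rewrite cat_path P1 L1 P2.
- by rewrite last_cat L1.
- by rewrite size_cat S1 S2.
- rewrite -cat_cons all_cat A1 /=; by move: A2 => /= /andP[].
Qed.

Lemma walk_sub (A B : {set T}) x y m : A \subset B -> walk_in e A x y m -> walk_in e B x y m.
Proof.
move=> /subsetP sAB [p [P L S A1]]; exists p; split => //.
by apply: sub_all A1 => z /sAB.
Qed.

Lemma all_take_drop (A : {set T}) x p i k : all (fun z => z \in A) (x :: p) ->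
  all (fun z => z \in A) (x :: take i p ++ drop k p).
Proof.
move=> /allP h; apply/allP => z; rewrite inE mem_cat => /orP[/eqP->|/orP[hz|hz]].
- by apply: h; rewrite inE eqxx.
- by apply: h; rewrite inE (mem_take hz) orbT.
- by apply: h; rewrite inE (mem_drop hz) orbT.
Qed.

Lemma walk_dup (A : {set T}) x p i j : path e x p -> all (fun z => z \in A) (x :: p) ->
  i < j -> j <= size p -> nth x (x :: p) i = nth x (x :: p) j ->
  exists2 m, m < size p & walk_in e A x (last x p) m.
Proof.
move=> hp ha hij hj heq; exists (i + (size p - j)); first lia.
exists (take i p ++ drop j p); split.
- have [h1 _] := path_split hp (ltnW (leq_trans hij hj)).
  have [_ h2] := path_split hp hj.
  by rewrite cat_path h1 last_take' ?heq //; lia.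
- by rewrite last_cat last_take' ?heq ?last_drop //; lia.
- by rewrite size_cat size_takel ?size_drop //; lia.
- exact: all_take_drop.
Qed.

Lemma walk_chord (A : {set T}) x p i j : path e x p -> all (fun z => z \in A) (x :: p) ->
  i.+1 < j -> j <= size p -> e (nth x (x :: p) i) (nth x (x :: p) j) ->
  exists2 m, m < size p & walk_in e A x (last x p) m.
Proof.
move=> hp ha hij hj he; case: j hij hj he => // k hij hk he.
exists (i + (size p - k)); first lia.
have hd : drop k p = nth x (x :: p) k.+1 :: drop k.+1 p by rewrite (drop_nth x).
exists (take i p ++ drop k p); split.
- have hi : i <= size p by lia.
  have [h1 _] := path_split hp hi.
  have [_ h2] := path_split hp hk.
  rewrite cat_path h1 last_take' ?hd /= ?he ?h2 //; lia.
- rewrite last_cat hd; exact: last_drop.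
- by rewrite size_cat size_takel ?size_drop //; lia.
- exact: all_take_drop.
Qed.
End W.

Lemma walk_take (T : finType) (e : rel T) (A : {set T}) x p i : path e x p -> all (fun z => z \in A) (x :: p) ->
  i <= size p -> walk_in e A x (nth x (x :: p) i) i.
Proof.
move=> hp ha hi; have [h1 _] := path_split hp hi.
exists (take i p); split => //; rewrite ?last_take' ?size_takel //.
apply/allP => z; rewrite inE => /orP[/eqP->|hz]; apply: (allP ha); first by rewrite inE eqxx.
by rewrite inE (mem_take hz) orbT.
Qed.

Lemma walk_drop (T : finType) (e : rel T) (A : {set T}) x p i : path e x p -> all (fun z => z \in A) (x :: p) ->
  i <= size p -> walk_in e A (nth x (x :: p) i) (last x p) (size p - i).
Proof.
move=> hp ha hi; have [_ h2] := path_split hp hi.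
exists (drop i p); split => //; rewrite ?last_drop ?size_drop //.
apply/allP => z; rewrite inE => /orP[/eqP->|hz]; first exact: all_nth.
by apply: (allP ha); rewrite inE (mem_drop hz) orbT.
Qed.

Lemma next_v (T : finType) (v x : T) p : v \notin x :: p -> next (v :: x :: p) v = x.
Proof. by move=> _; rewrite next_nth mem_head /= eqxx. Qed.

Lemma next_q (T : finType) (v x : T) p z : v \notin x :: p -> z \in x :: p ->
  next (v :: x :: p) z = nth v (x :: p) (index z (x :: p)).+1.
Proof.
move=> hv hz; rewrite next_nth inE hz orbT.
have -> : index z (v :: x :: p) = (index z (x :: p)).+1.
  rewrite /= ; case: eqP => // hvz; by rewrite hvz hz in hv.
by [].
Qed.

Section Key.
Variables (T : finType) (e : rel T) (v : T).
Hypotheses (sym : symmetric e) (irr : irreflexive e) (ch : chordal e).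

Lemma key K : forall n, n < K -> forall x y, x \in nbhd e v -> y \in nbhd e v ->
  walk_in e ([set: T] :\ v) x y n -> exists2 m, m <= n & walk_in e (nbhd e v) x y m.
Proof.
elim: K => // K IH n hn x y hx hy [p [P L Sz A]].
case: (classic (exists2 m, m <= n & walk_in e (nbhd e v) x y m)) => // H; exfalso.
have short : forall m, m < n -> ~ walk_in e ([set: T] :\ v) x y m.
  move=> m hm w; case: (IH m _ x y hx hy w) => [|m' hm' w']; first lia.
  by apply: H; exists m' => //; lia.
have internal : forall i, 0 < i < n -> nth x (x :: p) i \notin nbhd e v.
  move=> i /andP[h0 hi]; apply/negP => hin.
  have w1 := walk_take P A (ltnW (leq_trans hi (eq_leq (esym Sz)))).
  have w2 := walk_drop P A (ltnW (leq_trans hi (eq_leq (esym Sz)))).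
  rewrite L Sz in w2.
  case: (IH i _ x _ hx hin w1) => [|m1 hm1 w1']; first lia.
  case: (IH (n - i) _ _ y hin hy w2) => [|m2 hm2 w2']; first lia.
  by apply: H; exists (m1 + m2); [lia | exact: walk_cat w1' w2'].
have n2 : 1 < n.
  case: n hn Sz short internal H => [|[|n]] // hn Sz short internal H; exfalso.
  - move/size0nil: Sz => Ep; subst p; apply: H; exists 0 => //; exists [::]; split => //=.
    by rewrite hx.
  - case: p P L Sz A internal => [|y1 [|]] //= P L _ _ _; apply: H; exists 1 => //; exists [:: y1]; split => //=.
    by rewrite hx L hy.
have U : uniq (x :: p).
  apply/negP => /negP; case/(uniqPn x) => i [j [hij hj heq]].
  have [m hm w] := walk_dup P A hij hj heq.
  by rewrite L Sz in hm w; apply: (short m).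
have NC : forall i j, i.+1 < j -> j <= n -> ~ e (nth x (x :: p) i) (nth x (x :: p) j).
  move=> i j hij hj he; rewrite -Sz in hj.
  have [m hm w] := walk_chord P A hij hj he.
  by rewrite L Sz in hm w; apply: (short m).
have vq : v \notin x :: p.
  apply/negP => hv; move/allP: A => /(_ v hv); by rewrite !inE eqxx.
have hq : size (x :: p) = n.+1 by rewrite /= Sz.
have cl1 : forall w, w \in x :: p -> e v w -> (w == x) || (v == next (v :: x :: p) w).
  move=> w hw hvw; rewrite next_q //.
  have hj : index w (x :: p) < n.+1 by rewrite -hq index_mem.
  have wn := nth_index x hw.
  case: (index w (x :: p)) hj wn => [|j] hj wn; first by rewrite -wn eqxx.
  case: (ltnP j.+1 n) => hjn.
    have := internal j.+1; rewrite wn inE hvw => /(_ _) h; by have := h (hjn).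
  by rewrite nth_default ?hq ?eqxx ?orbT //; lia.
have cl2 : forall a b, a \in x :: p -> b \in x :: p -> index a (x :: p) < index b (x :: p) ->
    e a b -> b == next (v :: x :: p) a.
  move=> a b ha hb hab heab; rewrite next_q //.
  have hbn : index b (x :: p) < n.+1 by rewrite -hq index_mem.
  case: (ltnP (index a (x :: p)).+1 (index b (x :: p))) => h.
    exfalso; apply: (NC _ _ h); first lia.
    by rewrite !nth_index.
  have -> : (index a (x :: p)).+1 = index b (x :: p) by lia.
  by rewrite nth_index.
apply: (ch (c := v :: x :: p)); first by rewrite /= Sz; lia.
split.
- by rewrite cons_uniq vq U.
- rewrite /cycle /= rcons_path P L.
  move: hx hy; rewrite !inE => -> hy /=; by rewrite sym.
- move=> u w /predU1P[->|hu] /predU1P[->|hw] huw.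
  + by rewrite irr in huw.
  + by rewrite next_v //; have := cl1 w hw huw; rewrite orbC.
  + by rewrite next_v // orbC; rewrite sym in huw; exact: cl1.
  + case: (ltngtP (index u (x :: p)) (index w (x :: p))) => h.
    * by rewrite (cl2 u w).
    * by rewrite sym in huw; rewrite (cl2 w u) ?orbT.
    * have euw : u = w by rewrite -(nth_index x (hu : u \in x :: p)) h nth_index.
      by rewrite euw irr in huw.
Qed.
End Key.

Theorem lemma5 (T : finType) (e : rel T) (v : T) :
  simple_graph e -> connected_graph e -> chordal e ->
  forall x y : T, x \in nbhd e v -> y \in nbhd e v ->
  forall d : option nat,
    dist_is e ([set: T] :\ v) x y d <-> dist_is e (nbhd e v) x y d.
Proof.
move=> [sym irr] _ ch x y hx hy.
have sub : nbhd e v \subset [set: T] :\ v.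
  apply/subsetP => z; rewrite !inE andbT; apply: contraL => /eqP ->; by rewrite irr.
have K : forall n, walk_in e ([set: T] :\ v) x y n -> exists2 m, m <= n & walk_in e (nbhd e v) x y m.
  move=> n; exact: (key sym irr ch (ltnSn n) hx hy).
case=> [n|] /=; split.
- move=> [w hmin]; have [m hm w'] := K n w.
  have E : m = n.
    apply/eqP; rewrite eqn_leq hm /=; rewrite leqNgt; apply/negP => hlt.
    exact: (hmin m hlt (walk_sub sub w')).
  subst m; split => // m hm3 w2; exact: (hmin m hm3 (walk_sub sub w2)).
- move=> [w hmin]; split; first exact: walk_sub sub w.
  move=> m hm2 w2; have [m' hm' w3] := K m w2; apply: (hmin m') => //; lia.
- move=> h m w; exact: (h m (walk_sub sub w)).
- move=> h m w; have [m' _ w'] := K m w; exact: (h m').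
Qed.
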